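(* Let $H$ be a monoid and $X,Y\in\mathcal{P}_{\mathrm{fin},1}(H)$. Then: (i) if $X$ divides $Y$ in $\mathcal{P}_{\mathrm{fin},1}(H)$, then $X\subseteq Y$; (ii) $\mathcal{P}_{\mathrm{fin},1}(H)$ is reduced and Dedekind-finite; (iii) $X$ and $Y$ are associated in $\mathcal{P}_{\mathrm{fin},1}(H)$ if and only if $X=Y$; (iv) $X$ is irreducible in $\mathcal{P}_{\mathrm{fin},1}(H)$ if and only if $X\neq\{1_H\}$ and $X\neq YZ$ for all $Y,Z\in\mathcal{P}_{\mathrm{fin},1}(H)$ with $Y\subsetneq X$ and $Z\subsetneq X$; (v) $X$ is irreducible in $\mathcal{P}_{\mathrm{fin},1}(H)$ if and only if it is a quark; (vi) if $X$ is irreducible in $\mathcal{P}_{\mathrm{fin},1}(H)$ but not an atom, then $X^2=X$.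
   Context: For a monoid $H$, $\mathcal{P}_{\mathrm{fin},1}(H)$ denotes the set of all non-empty finite subsets of $H$ containing $1_H$, a monoid under $XY=\{xy:x\in X,y\in Y\}$ with identity $\{1_H\}$. In a monoid $M$: $x\mid_M y$ iff $y\in MxM=\{uxv:u,v\in M\}$; $x,y$ are associated if each divides the other; $x$ properly divides $y$ if $x\mid_M y$ and $y\nmid_M x$. A unit-divisor is an element dividing $1_M$; other elements are non-unit-divisors. An irreducible is a non-unit-divisor $a$ such that $a\neq xy$ for all non-unit-divisors $x,y$ properly dividing $a$. An atom is a non-unit-divisor that is not a product of two non-unit-divisors. A quark is a non-unit-divisor that is not properly divided by any non-unit-divisor. $M$ is reduced if its only unit is $1_M$, and Dedekind-finite if $xy=1_M$ implies $yx=1_M$. *)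

(* Defs.v *)
From HB Require Import structures.
From mathcomp Require Import all_boot.
From mathcomp Require Import finmap.

Set Implicit Arguments.
Unset Strict Implicit.
Unset Printing Implicit Defensive.

Local Open Scope fset_scope.
Local Open Scope group_scope.

Section MonoidNotions.
Variable M : monoidType.

Definition mdvd (x y : M) : Prop := exists u v : M, y = u * x * v.

Definition massoc (x y : M) : Prop := mdvd x y /\ mdvd y x.

Definition mpdvd (x y : M) : Prop := mdvd x y /\ ~ mdvd y x.

Definition unit_divisor (x : M) : Prop := mdvd x 1.

Definition irreducible (a : M) : Prop :=
  ~ unit_divisor a /\
  forall x y : M, ~ unit_divisor x -> ~ unit_divisor y ->
    mpdvd x a -> mpdvd y a -> a <> x * y.

Definition atom (a : M) : Prop :=
  ~ unit_divisor a /\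
  forall x y : M, ~ unit_divisor x -> ~ unit_divisor y -> a <> x * y.

Definition quark (a : M) : Prop :=
  ~ unit_divisor a /\ forall x : M, ~ unit_divisor x -> ~ mpdvd x a.

Definition munit (x : M) : Prop := exists y : M, x * y = 1 /\ y * x = 1.

Definition reduced : Prop := forall x : M, munit x -> x = 1.

Definition dedekind_finite : Prop := forall x y : M, x * y = 1 -> y * x = 1.

End MonoidNotions.

Section Pfin1.
Variable H : monoidType.

(* non-empty finite subsets of H containing 1_H (non-emptiness is implied) *)
Record pfin1 := Pfin1 { pval :> {fset H}; pval_one : (1 : H) \in pval }.

HB.instance Definition _ := [isSub for pval].
HB.instance Definition _ := [Choice of pfin1 by <:].

Definition setmul (X Y : {fset H}) : {fset H} := [fset x * y | x in X, y in Y].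

Lemma setmul_one (X Y : pfin1) : (1 : H) \in setmul X Y.
Proof.
rewrite /setmul -[X in X \in _](mulg1 1).
by apply: in_imfset2; [exact: pval_one | exact: pval_one].
Qed.

Definition pmul (X Y : pfin1) : pfin1 := Pfin1 (setmul_one X Y).

Lemma pone_in : (1 : H) \in [fset (1 : H)].
Proof. by rewrite in_fset1. Qed.

Definition pone : pfin1 := Pfin1 pone_in.

Lemma setmulP (X Y : {fset H}) (z : H) :
  reflect (exists x y, [/\ x \in X, y \in Y & z = x * y]) (z \in setmul X Y).
Proof.
apply: (iffP (imfset2P _ _ _ _ _)).
  by move=> [x xX [y yY ->]]; exists x, y.
by move=> [x [y [xX yY ->]]]; exists x => //; exists y.
Qed.

Lemma pmulA : associative pmul.
Proof.
move=> X Y Z; apply: val_inj => /=; apply/fsetP => w.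
apply/setmulP/setmulP.
  move=> [x [yz [xX /setmulP [y [z [yY zZ ->]]] ->]]].
  exists (x * y), z; split => //; last by rewrite mulgA.
  by apply/setmulP; exists x, y.
move=> [xy [z [/setmulP [x [y [xX yY ->]]] zZ ->]]].
exists x, (y * z); split => //; last by rewrite mulgA.
by apply/setmulP; exists y, z.
Qed.

Lemma pmul1 : left_id pone pmul.
Proof.
move=> X; apply: val_inj => /=; apply/fsetP => w.
apply/setmulP/idP.
  by move=> [o [x [/fset1P -> xX ->]]]; rewrite mul1g.
by move=> wX; exists 1, w; split => //; [exact: pone_in | rewrite mul1g].
Qed.

Lemma pmulg1 : right_id pone pmul.
Proof.
move=> X; apply: val_inj => /=; apply/fsetP => w.
apply/setmulP/idP.
  by move=> [x [o [xX /fset1P -> ->]]]; rewrite mulg1.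
by move=> wX; exists w, 1; split => //; [exact: pone_in | rewrite mulg1].
Qed.

HB.instance Definition _ := isMonoid.Build pfin1 pmulA pmul1 pmulg1.

End Pfin1.

(* Main.v *)
Require Import Defs.
From HB Require Import structures.
From mathcomp Require Import all_boot.
From mathcomp Require Import finmap.
From Stdlib Require Import Classical.

Local Open Scope fset_scope.
Local Open Scope group_scope.

Lemma valM {H : monoidType} (X Y : pfin1 H) : pval (X * Y) = setmul X Y.
Proof. by []. Qed.

Lemma val1 {H : monoidType} : pval (1 : pfin1 H) = [fset (1:H)].
Proof. by []. Qed.

Lemma subMl {H : monoidType} (X Y : pfin1 H) : pval X `<=` pval (X * Y).
Proof.
apply/fsubsetP => x xX; rewrite valM; apply/setmulP; exists x, 1.
by split => //; [exact: pval_one | rewrite mulg1].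
Qed.

Lemma subMr {H : monoidType} (X Y : pfin1 H) : pval Y `<=` pval (X * Y).
Proof.
apply/fsubsetP => x xX; rewrite valM; apply/setmulP; exists 1, x.
by split => //; [exact: pval_one | rewrite mul1g].
Qed.

Lemma dvd_sub {H : monoidType} (X Y : pfin1 H) : mdvd X Y -> pval X `<=` pval Y.
Proof.
move=> [u [v ->]]; have h1 := subMr u X; have h2 := subMl (u * X) v.
exact: (fsubset_trans h1 h2).
Qed.

Lemma dvd_refl {H : monoidType} (X : pfin1 H) : mdvd X X.
Proof. by exists 1, 1; rewrite mul1g mulg1. Qed.

Lemma sub_antisym {H : monoidType} (X Y : pfin1 H) :
  pval X `<=` pval Y -> pval Y `<=` pval X -> X = Y.
Proof.
move=> s1 s2; apply: val_inj; apply/eqP; rewrite eqEfsubset s1 s2 //.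
Qed.

Lemma ud_iff {H : monoidType} (X : pfin1 H) :
  unit_divisor X <-> pval X = [fset (1 : H)].
Proof.
split.
  move/dvd_sub; rewrite val1 => s; apply/eqP; rewrite eqEfsubset s /=.
  by rewrite fsub1set pval_one.
move=> e; have -> : X = 1 by apply: val_inj; exact: e.
exact: dvd_refl.
Qed.

Lemma pdvd_proper {H : monoidType} (X Y : pfin1 H) :
  mpdvd X Y -> pval X `<` pval Y.
Proof.
move=> [d nd]; rewrite fproperEneq dvd_sub // andbT.
apply/eqP => e; apply: nd; have -> : X = Y by apply: val_inj.
exact: dvd_refl.
Qed.

Lemma notproper {H : monoidType} (X Y : pfin1 H) :
  pval Y `<=` pval X -> ~~ (pval Y `<` pval X) -> Y = X.
Proof.
move=> s; rewrite fproperEneq s andbT negbK => /eqP e; exact: val_inj.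
Qed.

Definition Pirr {H : monoidType} (X : pfin1 H) :=
  pval X <> [fset (1 : H)] /\
  forall Y Z : pfin1 H, pval Y `<` pval X -> pval Z `<` pval X -> X <> Y * Z.

Lemma irrP {H : monoidType} (X : pfin1 H) : irreducible X <-> Pirr X.
Proof.
split.
  move=> [nu hi]; split; first by move=> e; apply: nu; apply/ud_iff.
  move=> Y Z pY pZ e.
  have nuY : ~ unit_divisor Y.
    move/ud_iff => eY; have eY1 : Y = 1 by apply: val_inj; exact: eY.
    by move: pZ; rewrite e eY1 mul1g fproperEneq eqxx.
  have nuZ : ~ unit_divisor Z.
    move/ud_iff => eZ; have eZ1 : Z = 1 by apply: val_inj; exact: eZ.
    by move: pY; rewrite e eZ1 mulg1 fproperEneq eqxx.
  apply: (hi Y Z nuY nuZ _ _ e).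
    split; first by exists 1, Z; rewrite mul1g.
    move/dvd_sub => s; move: pY; rewrite fproperEneq => /andP [ne s'].
    by move: ne; rewrite eqEfsubset s s'.
  split; first by exists Y, 1; rewrite mulg1.
  move/dvd_sub => s; move: pZ; rewrite fproperEneq => /andP [ne s'].
  by move: ne; rewrite eqEfsubset s s'.
move=> [n1 hi]; split; first by move/ud_iff.
move=> x y _ _ px py; apply: hi; exact: pdvd_proper.
Qed.

Lemma L1 {H : monoidType} (X Y : pfin1 H) :
  Pirr X -> X = X * Y -> pval Y `<=` pval X -> pval Y <> [fset (1 : H)] -> Y = X.
Proof.
move=> [n1 hi] e s nY; apply: notproper => //; apply/negP => pY.
have [y yY ny1] : exists2 y, y \in pval Y & y != 1.
  case: (boolP [exists y : pval Y, val y != 1]).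
    by move/existsP => [[y yY] /= ny]; exists y.
  move/existsPn => h; exfalso; apply: nY; apply/eqP; rewrite eqEfsubset.
  rewrite fsub1set pval_one andbT; apply/fsubsetP => z zY.
  by move: (h [` zY]) => /negbNE /= /eqP ->; rewrite in_fset1.
have oneA : (1 : H) \in pval X `\ y by rewrite in_fsetD1 eq_sym ny1 pval_one.
set A := Pfin1 oneA.
apply: (hi A Y _ pY).
- rewrite fproperEneq; apply/andP; split; last first.
    by apply/fsubsetP => z; rewrite in_fsetD1 => /andP [].
  apply/eqP => eA; have : y \in pval X by apply: (fsubsetP s).
  by rewrite -eA in_fsetD1 eqxx.
- apply: val_inj; change (pval X = setmul A Y); apply/fsetP => w; apply/idP/setmulP.
  + move=> wX; case: (eqVneq w y) => [-> | nwy].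
      by exists 1, y; split => //; rewrite mul1g.
    exists w, 1; split => //; last by rewrite mulg1.
      by rewrite in_fsetD1 nwy.
    exact: pval_one.
  + move=> [a [b [aA bY ->]]]; rewrite e valM; apply/setmulP; exists a, b.
    by split => //; move: aA; rewrite in_fsetD1 => /andP [].
Qed.

Lemma L2 {H : monoidType} (X Y : pfin1 H) :
  Pirr X -> X = Y * X -> pval Y `<=` pval X -> pval Y <> [fset (1 : H)] -> Y = X.
Proof.
move=> [n1 hi] e s nY; apply: notproper => //; apply/negP => pY.
have [y yY ny1] : exists2 y, y \in pval Y & y != 1.
  case: (boolP [exists y : pval Y, val y != 1]).
    by move/existsP => [[y yY] /= ny]; exists y.
  move/existsPn => h; exfalso; apply: nY; apply/eqP; rewrite eqEfsubset.
  rewrite fsub1set pval_one andbT; apply/fsubsetP => z zY.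
  by move: (h [` zY]) => /negbNE /= /eqP ->; rewrite in_fset1.
have oneA : (1 : H) \in pval X `\ y by rewrite in_fsetD1 eq_sym ny1 pval_one.
set A := Pfin1 oneA.
apply: (hi Y A pY).
- rewrite fproperEneq; apply/andP; split; last first.
    by apply/fsubsetP => z; rewrite in_fsetD1 => /andP [].
  apply/eqP => eA; have : y \in pval X by apply: (fsubsetP s).
  by rewrite -eA in_fsetD1 eqxx.
- apply: val_inj; change (pval X = setmul Y A); apply/fsetP => w; apply/idP/setmulP.
  + move=> wX; case: (eqVneq w y) => [-> | nwy].
      by exists y, 1; split => //; rewrite mulg1.
    exists 1, w; split => //; last by rewrite mul1g.
      exact: pval_one.
    by rewrite in_fsetD1 nwy.
  + move=> [b [a [bY aA ->]]]; rewrite e valM; apply/setmulP; exists b, a.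
    by split => //; move: aA; rewrite in_fsetD1 => /andP [].
Qed.

Theorem lemma2p2 (H : monoidType) :
  (* (i) *)
  (forall X Y : pfin1 H, mdvd X Y -> pval X `<=` pval Y) /\
  (* (ii) *)
  (reduced (pfin1 H) /\ dedekind_finite (pfin1 H)) /\
  (* (iii) *)
  (forall X Y : pfin1 H, massoc X Y <-> X = Y) /\
  (* (iv) *)
  (forall X : pfin1 H,
     irreducible X <->
     (pval X <> [fset (1 : H)] /\
      forall Y Z : pfin1 H, pval Y `<` pval X -> pval Z `<` pval X -> X <> Y * Z)) /\
  (* (v) *)
  (forall X : pfin1 H, irreducible X <-> quark X) /\
  (* (vi) *)
  (forall X : pfin1 H, irreducible X -> ~ atom X -> X * X = X).
Proof.
have one_of : forall X Y : pfin1 H, X * Y = 1 -> X = 1.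
  move=> X Y e; apply: sub_antisym.
    by rewrite -[pval 1]/(pval (1 : pfin1 H)) -e; exact: subMl.
  by rewrite val1 fsub1set pval_one.
split; first by move=> X Y; exact: dvd_sub.
split.
  split.
    by move=> X [Y [e _]]; exact: one_of e.
  move=> X Y e; have X1 := one_of _ _ e.
  have Y1 : Y = 1 by move: e; rewrite X1 mul1g.
  by rewrite X1 Y1 mulg1.
split.
  move=> X Y; split; first by move=> [/dvd_sub a /dvd_sub b]; exact: sub_antisym.
  by move=> ->; split; exact: dvd_refl.
split; first by move=> X; exact: irrP.
split.
  move=> X; split; last first.
    move=> [nu hq]; split => // x y nx _ px _ _; exact: (hq x nx px).
  move=> /irrP Pi; have [n1 hi] := Pi; split; first by move/ud_iff.
  move=> Y nY [[U [V e]] nd].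
  have pY : pval Y `<` pval X by apply: pdvd_proper; split => //; exists U, V.
  have nY1 : pval Y <> [fset (1 : H)] by move=> h; apply: nY; apply/ud_iff.
  have nYX : Y <> X by move=> h; move: pY; rewrite h fproperEneq eqxx.
  have sUY : pval (U * Y) `<=` pval X by apply: dvd_sub; exists 1, V; rewrite mul1g.
  have sV : pval V `<=` pval X by apply: dvd_sub; exists (U * Y), 1; rewrite mulg1.
  have sU : pval U `<=` pval X.
    apply: dvd_sub; exists 1, (Y * V); rewrite mul1g mulgA; exact: e.
  case: (boolP (pval (U * Y) `<` pval X)) => hUY.
    case: (boolP (pval V `<` pval X)) => hV.
      by exfalso; exact: (hi _ _ hUY hV e).
    have eV := notproper _ _ sV hV.
    have eYX : Y * X = X.
      apply: sub_antisym; last exact: subMr.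
      apply: dvd_sub; exists U, 1; rewrite mulg1 mulgA -{2}eV; exact: e.
    by apply: nYX; exact: (L2 _ _ Pi (esym eYX) (fproper_sub pY) nY1).
  have eUY := notproper _ _ sUY hUY.
  case: (boolP (pval U `<` pval X)) => hU.
    by exfalso; exact: (hi _ _ hU pY (esym eUY)).
  have eU := notproper _ _ sU hU.
  apply: nYX; apply: (L1 _ _ Pi _ (fproper_sub pY) nY1).
  by rewrite -{1}eUY eU.
move=> X /irrP /[dup] Pi [n1 hi] na.
have [x [y [nx ny e]]] : exists x y : pfin1 H, [/\ ~ unit_divisor x, ~ unit_divisor y & X = x * y].
  apply: NNPP => h; apply: na; split; first by move/ud_iff.
  move=> x y nx ny e; apply: h; by exists x, y.
have sx : pval x `<=` pval X by rewrite e; exact: subMl.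
have sy : pval y `<=` pval X by rewrite e; exact: subMr.
have nx1 : pval x <> [fset (1 : H)] by move=> h; apply: nx; apply/ud_iff.
have ny1 : pval y <> [fset (1 : H)] by move=> h; apply: ny; apply/ud_iff.
case: (boolP (pval x `<` pval X)) => hx.
  case: (boolP (pval y `<` pval X)) => hy.
    by exfalso; exact: (hi _ _ hx hy e).
  have ey := notproper _ _ sy hy; rewrite ey in e.
  by have ex := L2 _ _ Pi e sx nx1; rewrite -{1}ex -e.
have ex := notproper _ _ sx hx; rewrite ex in e.
by have ey := L1 _ _ Pi e sy ny1; rewrite -{2}ey -e.
Qed.
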